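(* Let $(\mathcal{A},\mathbf{m})$ be a multiarrangement in $\mathbb{Q}^l$ with $\mathcal{A}=\{H_1,\dots,H_n\}$, $H_i=\alpha_i^{-1}(0)$, where the $\alpha_i\in\mathbb{Z}[x_1,\dots,x_l]$ are linear forms such that no prime number divides any $\alpha_i$. If $(\mathcal{A},\mathbf{m})$ is free in $\mathbb{Q}^l$ with exponents $(e_1,\dots,e_l)$, then for every sufficiently large prime $p$, the multiarrangement $(\mathcal{A}_p,\mathbf{m})$ is free in $\mathbb{F}_p^l$ with exponents $(e_1,\dots,e_l)$.
   Context: Let $\mathbb{K}$ be a field and $S=\mathbb{K}[x_1,\dots,x_l]$. A multiarrangement $(\mathcal{A},\mathbf{m})$ in $\mathbb{K}^l$ is a finite set $\mathcal{A}=\{H_1,\dots,H_n\}$ of distinct linear hyperplanes $H_i=\alpha_i^{-1}(0)$ together with $\mathbf{m}\colon\mathcal{A}\to\mathbb{Z}_{\ge0}$; $Q(\mathcal{A},\mathbf{m})=\prod_i\alpha_i^{\mathbf{m}(H_i)}$. $D(\mathcal{A},\mathbf{m})=\{\delta=\sum_j f_j\partial_{x_j}: f_j\in S,\ \delta(\alpha_i)\in\alpha_i^{\mathbf{m}(H_i)}S\ \forall i\}$. $(\mathcal{A},\mathbf{m})$ is free with exponents $(e_1,\dots,e_l)$ if $D(\mathcal{A},\mathbf{m})$ is a free $S$-module with a basis of homogeneous derivations (all coefficients homogeneous of the same degree) of polynomial degrees $e_1,\dots,e_l$. For a prime $p$, $\pi_p$ is reduction mod $p$ on $\mathbb{Z}[x_1,\dots,x_l]$;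 $p$ is good if $\pi_p(\alpha_i)\neq\pi_p(\alpha_j)$ for $i\ne j$ (all but finitely many primes are good). For good $p$, $(\mathcal{A}_p,\mathbf{m})$ is the multiarrangement in $\mathbb{F}_p^l$ with hyperplanes $\pi_p(\alpha_i)^{-1}(0)$ of multiplicity $\mathbf{m}(H_i)$. *)

(* Defs.v *)
From HB Require Import structures.
From mathcomp Require Import all_boot all_order all_algebra.
From mathcomp Require Import mpoly.
Set Implicit Arguments. Unset Strict Implicit. Unset Printing Implicit Defensive.
Import GRing.Theory.
Local Open Scope ring_scope.

(* A linear form alpha = sum_j a_j x_j in K[x_1..x_l] is given by its
   coefficient vector a : 'I_l -> K.  A multiarrangement with n hyperplanes
   is a family a : 'I_n -> 'I_l -> K of linear forms plus m : 'I_n -> nat. *)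

Section MultiArr.
Variables (K : fieldType) (l n : nat).

Definition lform (a : 'I_l -> K) : {mpoly K[l]} := \sum_(j < l) a j *: 'X_j.

(* a derivation sum_j f_j d/dx_j, given by its coefficients f_j *)
Definition deriv := 'I_l -> {mpoly K[l]}.

Definition dapply (d : deriv) (a : 'I_l -> K) : {mpoly K[l]} :=
  \sum_(j < l) a j *: d j.

Definition in_D (a : 'I_n -> 'I_l -> K) (m : 'I_n -> nat) (d : deriv) : Prop :=
  forall i, exists q : {mpoly K[l]}, dapply d (a i) = lform (a i) ^+ m i * q.

(* p is homogeneous of (total) degree e (the zero polynomial is homogeneous
   of every degree) *)
Definition homogeneous (e : nat) (p : {mpoly K[l]}) : Prop :=
  forall mo, mo \in msupp p -> mdeg mo = e.

Definition free_with_exponents (a : 'I_n -> 'I_l -> K) (m : 'I_n -> nat)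
    (e : 'I_l -> nat) : Prop :=
  exists theta : 'I_l -> deriv,
    [/\ forall k, in_D a m (theta k),
        forall k j, homogeneous (e k) (theta k j),
        forall d, in_D a m d ->
          exists g : 'I_l -> {mpoly K[l]},
            forall j, d j = \sum_(k < l) g k * theta k j
      & forall g : 'I_l -> {mpoly K[l]},
          (forall j, \sum_(k < l) g k * theta k j = 0) -> forall k, g k = 0].

Definition distinct_hyperplanes (a : 'I_n -> 'I_l -> K) : Prop :=
  (forall i, exists j, a i j != 0) /\
  (forall i i', i != i' -> forall c : K, ~ (forall j, a i j = c * a i' j)).

End MultiArr.

(* integral forms viewed over a field K (for K = 'F_p this is reduction mod p) *)
Definition forms_in (K : fieldType) l n (alpha : 'I_n -> 'I_l -> int) :
  'I_n -> 'I_l -> K := fun i j => (alpha i j)%:~R.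

(* Main.v *)
Require Import Defs.
From HB Require Import structures.
From mathcomp Require Import all_boot all_order all_algebra.
From mathcomp Require Import mpoly.
From mathcomp Require Import ring.
Set Implicit Arguments. Unset Strict Implicit. Unset Printing Implicit Defensive.
Import GRing.Theory.
Local Open Scope ring_scope.

Section Generic.
Variables (K : fieldType) (l : nat).
Local Notation P := {mpoly K[l]}.

Definition mdvd (x y : P) := exists r, y = x * r.

Lemma coef_lform (a : 'I_l -> K) j : (lform a)@_(U_(j)) = a j.
Proof.
rewrite /lform raddf_sum /= (bigD1 j) //= big1 => [|i /negbTE ne].
  by rewrite mcoeffZ mcoeffXU eqxx mulr1 addr0.
by rewrite mcoeffZ mcoeffXU ne mulr0.
Qed.

Lemma lform_eq0 (a : 'I_l -> K) : lform a = 0 -> forall j, a j = 0.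
Proof. by move=> h j; rewrite -coef_lform h mcoeff0. Qed.

Lemma lform_neq0 (a : 'I_l -> K) j : a j != 0 -> lform a != 0.
Proof. by move=> nz; apply/eqP => /lform_eq0 /(_ j) /eqP; rewrite (negbTE nz). Qed.

Definition sigt (a : 'I_l -> K) (j0 : 'I_l) : l.-tuple P :=
  [tuple ('X_i - (i == j0)%:R *: ((a j0)^-1 *: lform a)) | i < l].
Definition sig a j0 (p : P) : P := p \mPo sigt a j0.

Lemma sigX a j0 i : sig a j0 'X_i = 'X_i - (i == j0)%:R *: ((a j0)^-1 *: lform a).
Proof. by rewrite /sig comp_mpolyXU -tnth_nth tnth_mktuple. Qed.

Lemma sigC a j0 c : sig a j0 c%:MP = c%:MP.
Proof. exact: comp_mpolyC. Qed.

Lemma sig_lform a j0 b :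
  sig a j0 (lform b) = lform b - (b j0 * (a j0)^-1) *: lform a.
Proof.
rewrite /sig /lform raddf_sum /=.
under eq_bigr => i _ do rewrite comp_mpolyZ -/(sig a j0 _) sigX scalerBr.
rewrite sumrB; congr (_ - _).
rewrite (bigD1 j0) //= big1 => [|i /negbTE ne]; last by rewrite ne scale0r scaler0.
by rewrite eqxx scale1r addr0 scalerA.
Qed.

Lemma sig_lform_self a j0 : a j0 != 0 -> sig a j0 (lform a) = 0.
Proof. by move=> nz; rewrite sig_lform mulfV // scale1r subrr. Qed.

Lemma sig_sub_dvd a j0 g : mdvd (lform a) (g - sig a j0 g).
Proof.
set t := lform a.
have Sadd u v : mdvd t (u - sig a j0 u) -> mdvd t (v - sig a j0 v) ->
    mdvd t ((u + v) - sig a j0 (u + v)).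
  move=> [r1 e1] [r2 e2]; exists (r1 + r2).
  by rewrite /sig rmorphD /= -/(sig a j0 u) -/(sig a j0 v) mulrDr -e1 -e2 opprD addrACA.
have Smul u v : mdvd t (u - sig a j0 u) -> mdvd t (v - sig a j0 v) ->
    mdvd t ((u * v) - sig a j0 (u * v)).
  move=> [r1 e1] [r2 e2]; exists (u * r2 + r1 * sig a j0 v).
  rewrite /sig rmorphM /= -/(sig a j0 u) -/(sig a j0 v).
  rewrite mulrDr mulrCA -e2 mulrA -e1.
  by rewrite mulrBr mulrBl addrA subrK.
have S1 : mdvd t (1 - sig a j0 1).
  by exists 0; rewrite /sig comp_mpoly1 subrr mulr0.
have Sprod (s : seq 'I_l) (F : 'I_l -> P) : (forall i, mdvd t (F i - sig a j0 (F i))) ->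
    mdvd t ((\prod_(i <- s) F i) - sig a j0 (\prod_(i <- s) F i)).
  move=> HF; elim: s => [|x s IH]; first by rewrite big_nil.
  by rewrite big_cons; apply: Smul.
have Sexp u k : mdvd t (u - sig a j0 u) -> mdvd t (u ^+ k - sig a j0 (u ^+ k)).
  move=> Hu; elim: k => [|k IH]; first by rewrite expr0.
  by rewrite exprS; apply: Smul.
have SX i : mdvd t ('X_i - sig a j0 'X_i).
  exists ((i == j0)%:R * (a j0)^-1)%:MP.
  by rewrite sigX opprB addrC subrK scalerA [RHS]mulrC mul_mpolyC.
elim/mpolyind: g => [|c mo p _ _ IH].
  by exists 0; rewrite /sig raddf0 subrr mulr0.
apply Sadd => //.
have -> : c *: 'X_[mo] = c%:MP * 'X_[mo] :> P by rewrite mul_mpolyC.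
apply Smul; first by exists 0; rewrite sigC subrr mulr0.
rewrite mpolyXE_id; apply: Sprod => i; exact: Sexp.
Qed.

Lemma sig_kernel a j0 g : sig a j0 g = 0 -> mdvd (lform a) g.
Proof. by move=> h; have := sig_sub_dvd a j0 g; rewrite h subr0. Qed.


Lemma dvd_cancel_sig a j0 f g k : a j0 != 0 -> sig a j0 f != 0 ->
  mdvd (lform a ^+ k) (f * g) -> mdvd (lform a ^+ k) g.
Proof.
move=> nz nzf; have tnz := lform_neq0 nz.
elim: k g => [|k IH] g; first by move=> _; exists g; rewrite expr0 mul1r.
move=> [r e].
have sg0 : sig a j0 g = 0.
  have : sig a j0 (f * g) = 0.
    by rewrite e /sig rmorphM rmorphXn /= -/(sig a j0 _) sig_lform_self // expr0n mul0r.
  by rewrite /sig rmorphM /= => /eqP; rewrite mulf_eq0 (negbTE nzf) /= => /eqP.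
have [g1 eg] := sig_kernel sg0.
have : mdvd (lform a ^+ k) (f * g1).
  exists r; apply: (mulfI tnz).
  by rewrite mulrCA -eg e exprS mulrA.
move=> /IH [r1 e1]; exists r1; by rewrite eg e1 exprS mulrA.
Qed.

Lemma lform_sub (b c : 'I_l -> K) (x : K) :
  lform b - x *: lform c = lform (fun j => b j - x * c j).
Proof.
rewrite /lform scaler_sumr -sumrB; apply: eq_bigr => j _.
by rewrite scalerA scalerBl.
Qed.

Lemma dapply_mul (c : P) (d : 'I_l -> P) b :
  dapply (fun j => c * d j) b = c * dapply d b.
Proof.
rewrite /dapply mulr_sumr; apply: eq_bigr => j _; by rewrite scalerAr.
Qed.

Section Arr.
Variables (n : nat) (a : 'I_n -> 'I_l -> K) (m : 'I_n -> nat).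
Variable j0 : 'I_n -> 'I_l.
Hypothesis j0nz : forall i, a i (j0 i) != 0.
Hypothesis j0first : forall i (j : 'I_l), (j < j0 i)%N -> a i j = 0.
Hypothesis noprop : forall i i', i != i' -> forall c : K, ~ (forall j, a i j = c * a i' j).

Local Notation lf i := (lform (a i)).
Local Notation sg i := (sig (a i) (j0 i)).
Definition Qp := \prod_(i < n) lform (a i) ^+ m i.

Lemma lf_neq0 i : lf i != 0.
Proof. exact: lform_neq0 (j0nz i). Qed.

Lemma sg_lf i i' : i != i' -> sg i (lf i') != 0.
Proof.
move=> ne; have ne' : i' != i by rewrite eq_sym.
rewrite sig_lform lform_sub; apply/eqP => /lform_eq0 h.
apply: (@noprop i' i ne' (a i' (j0 i) / a i (j0 i))) => j.
by move: (h j) => /eqP; rewrite subr_eq0 => /eqP.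
Qed.

Lemma sg_lf_self i : sg i (lf i) = 0.
Proof. exact: sig_lform_self. Qed.

Lemma Qp_neq0 : Qp != 0.
Proof. by apply/prodf_neq0 => i _; rewrite expf_neq0 // lf_neq0. Qed.

Lemma sg_prod_neq0 i (r : seq 'I_n) (k : 'I_n -> nat) :
  i \notin r -> sg i (\prod_(i' <- r) lf i' ^+ k i') != 0.
Proof.
move=> nr; rewrite /sig rmorph_prod prodf_seq_neq0; apply/allP => i' ir /=.
rewrite rmorphXn expf_neq0 // -/(sig _ _ _) sg_lf //; apply/eqP => e; move: nr; by rewrite e ir.
Qed.

Lemma dvd_prod (r : seq 'I_n) h : uniq r ->
  (forall i, i \in r -> mdvd (lf i ^+ m i) h) ->
  mdvd (\prod_(i <- r) lf i ^+ m i) h.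
Proof.
elim: r => [|i r IH] /=; first by move=> _ _; exists h; rewrite big_nil mul1r.
move=> /andP [nir ur] H.
have [u eu] := IH ur (fun i' hi' => H i' (mem_behead (s:=i::r) hi')).
have : mdvd (lf i ^+ m i) ((\prod_(i' <- r) lf i' ^+ m i') * u).
  by rewrite -eu; apply: H; rewrite inE eqxx.
move=> /(dvd_cancel_sig (j0nz i) (sg_prod_neq0 m nir)) [v ev].
by exists v; rewrite big_cons eu ev mulrCA mulrA.
Qed.

Lemma peel (r : seq 'I_n) (k : 'I_n -> nat) h v :
  (forall i, i \in r -> sg i h != 0) ->
  h * v = \prod_(i <- r) lf i ^+ k i -> h \is a GRing.unit.
Proof.
elim: r v => [|i r IH] v H; first by rewrite big_nil => e; apply/unitrPr; exists v.
rewrite big_cons => e.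
have : mdvd (lf i ^+ k i) (h * v) by rewrite e; exists (\prod_(i' <- r) lf i' ^+ k i').
move=> /(dvd_cancel_sig (j0nz i) (H i (mem_head _ _))) [v' ev].
apply: (IH v') => [i' hi'|]; first by apply: H; rewrite inE hi' orbT.
apply: (mulfI (expf_neq0 (k i) (lf_neq0 i))).
by rewrite -e ev mulrCA.
Qed.


Lemma prod_if1 (j1 : 'I_l) (x : P) : \prod_(j < l) (if j == j1 then x else 1) = x.
Proof. by rewrite (bigD1 j1) //= eqxx big1 ?mulr1 // => j /negbTE ->. Qed.

Lemma det_dvd_one (N : 'M[P]_l) i :
  (forall r, in_D a m (fun j => N r j)) -> mdvd (lf i ^+ m i) (\det N).
Proof.
move=> HN.
have [q hq] := fin_all_exists (fun r => HN r i).
pose Pm : 'M[P]_l := \matrix_(j, j') (if j' == j0 i then (a i j)%:MP else (j == j')%:R).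
pose N' : 'M[P]_l := \matrix_(r, j') (if j' == j0 i then q r else N r j').
pose dg : 'rV[P]_l := \row_j' (if j' == j0 i then lf i ^+ m i else 1).
have e1 : N *m Pm = N' *m diag_mx dg.
  apply/matrixP => r j'; rewrite mul_mx_diag !mxE.
  have [->|ne] := eqVneq j' (j0 i).
    rewrite mulrC -hq /dapply; apply: eq_bigr => j _.
    by rewrite mxE eqxx mulrC mul_mpolyC.
  rewrite mulr1 (bigD1 j') //= big1 => [|j nj]; first by rewrite mxE (negbTE ne) eqxx mulr1 addr0.
  by rewrite mxE (negbTE ne) (negbTE nj) mulr0.
have dPm : \det Pm = (a i (j0 i))%:MP.
  rewrite det_trig; last first.
    apply/is_trig_mxP => j j' lt; rewrite mxE.
    have [e|ne] := eqVneq j' (j0 i).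
      by rewrite j0first ?mpolyC0 // -e.
    by have := ltn_eqF lt; rewrite -(inj_eq val_inj) /= => ->.
  rewrite -[RHS](prod_if1 (j0 i)); apply: eq_bigr => j _; rewrite mxE eqxx.
  by case: eqP => [->|].
have := congr1 determinant e1; rewrite !det_mulmx det_diag dPm.
have -> : \prod_j dg 0 j = lf i ^+ m i.
  by rewrite -[RHS](prod_if1 (j0 i)); apply: eq_bigr => j _; rewrite mxE.
move=> e2; exists (\det N' * ((a i (j0 i))^-1)%:MP).
apply: (mulIf (x := (a i (j0 i))%:MP)); first by rewrite mpolyC_eq0.
by rewrite e2 -!mulrA -mpolyCM mulVf // mulr1 mulrC.
Qed.

Lemma det_dvd_Q (N : 'M[P]_l) :
  (forall r, in_D a m (fun j => N r j)) -> mdvd Qp (\det N).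
Proof.
move=> HN; apply: dvd_prod; first exact: index_enum_uniq.
move=> i _; exact: det_dvd_one.
Qed.

Lemma in_D_ext (d1 d2 : Defs.deriv K l) : (forall j, d1 j = d2 j) ->
  in_D a m d1 -> in_D a m d2.
Proof.
move=> e H i; have [q hq] := H i; exists q; rewrite -hq /dapply.
by apply: eq_bigr => j _; rewrite e.
Qed.

Definition Mx (th : 'I_l -> Defs.deriv K l) : 'M[P]_l := \matrix_(k, j) th k j.

Lemma Mx_rows th : (forall k, in_D a m (th k)) -> forall r, in_D a m (fun j => Mx th r j).
Proof. by move=> H r; apply: in_D_ext (H r) => j; rewrite mxE. Qed.

Lemma saito_gen (th : 'I_l -> Defs.deriv K l) h :
  (forall k, in_D a m (th k)) -> h \is a GRing.unit -> \det (Mx th) = Qp * h ->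
  forall d, in_D a m d -> exists g : 'I_l -> P, forall j, d j = \sum_(k < l) g k * th k j.
Proof.
move=> Hth hU eM d Hd.
pose M := Mx th.
pose Nk k : 'M[P]_l := \matrix_(r, j) (if r == k then d j else th r j).
have HNk k r : in_D a m (fun j => Nk k r j).
  have [e|ne] := eqVneq r k.
    by apply: in_D_ext Hd => j; rewrite mxE e eqxx.
  by apply: in_D_ext (Hth r) => j; rewrite mxE (negbTE ne).
have dk k : \det (Nk k) = \sum_j d j * cofactor M k j.
  rewrite (expand_det_row _ k); apply: eq_bigr => j _.
  have cof : cofactor (Nk k) k j = cofactor M k j.
    rewrite /cofactor.
    have -> : row' k (col' j (Nk k)) = row' k (col' j M).
      apply/matrixP => r c; rewrite !mxE.
      by rewrite eq_sym (negbTE (neq_lift k r)).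
    by [].
  by rewrite cof [Nk k k j]mxE eqxx.
have [rr hr] := fin_all_exists (fun k => det_dvd_Q (HNk k)).
have key j : \sum_k \det (Nk k) * th k j = \det M * d j.
  under eq_bigr do rewrite dk mulr_suml.
  rewrite exchange_big /=.
  transitivity (\sum_j' d j' * (\adj M *m M) j' j).
    apply: eq_bigr => j' _; rewrite mxE mulr_sumr; apply: eq_bigr => k _.
    by rewrite /M [Mx th k j]mxE [(\adj _) _ _]mxE /cofactor !mulrA.
  rewrite mul_adj_mx (bigD1 j) //= big1 => [|j' nj]; last by rewrite mxE (negbTE nj) mulr0n mulr0.
  by rewrite mxE eqxx mulr1n addr0 mulrC.
exists (fun k => h^-1 * rr k) => j.
have e2 : Qp * \sum_k rr k * th k j = Qp * (h * d j).
  rewrite mulrA -eM -key mulr_sumr; apply: eq_bigr => k _.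
  by rewrite hr mulrA.
have e3 := mulfI Qp_neq0 e2.
rewrite -(mulKr hU (d j)) -e3 mulr_sumr; apply: eq_bigr => k _; by rewrite mulrA.
Qed.

Lemma saito_indep (th : 'I_l -> Defs.deriv K l) h :
  h \is a GRing.unit -> \det (Mx th) = Qp * h ->
  forall g : 'I_l -> P, (forall j, \sum_(k < l) g k * th k j = 0) -> forall k, g k = 0.
Proof.
move=> hU eM g Hg k'.
have dM : \det (Mx th) != 0.
  by rewrite eM mulf_neq0 ?Qp_neq0 //; apply/eqP => h0; move: hU; rewrite h0 unitr0.
have : \sum_j (\sum_k g k * th k j) * (\adj (Mx th)) j k' = g k' * \det (Mx th).
  under eq_bigr do rewrite mulr_suml.
  rewrite exchange_big /=.
  transitivity (\sum_k g k * (Mx th *m \adj (Mx th)) k k').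
    apply: eq_bigr => k _; rewrite mxE mulr_sumr; apply: eq_bigr => j _.
    by rewrite [Mx th k j]mxE mulrA.
  rewrite mul_mx_adj (bigD1 k') //= big1 => [|k nk]; last by rewrite mxE (negbTE nk) mulr0n mulr0.
  by rewrite mxE eqxx mulr1n addr0.
rewrite big1 => [|j _]; last by rewrite Hg mul0r.
by move/esym/eqP; rewrite mulf_eq0 (negbTE dM) orbF => /eqP.
Qed.

Definition Qo i := \prod_(i' < n | i' != i) lform (a i') ^+ m i'.

Lemma Qp_split i : Qp = lf i ^+ m i * Qo i.
Proof. by rewrite /Qp (bigD1 i). Qed.

Lemma Qo_split i i' : i' != i -> exists R, Qo i = lf i' ^+ m i' * R.
Proof. by move=> ne; rewrite /Qo (bigD1 i') //=; eexists. Qed.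

Lemma sg_Qo i : sg i (Qo i) != 0.
Proof.
rewrite /sig rmorph_prod; apply/prodf_neq0 => i' ne.
by rewrite rmorphXn expf_neq0 // -/(sig _ _ _) sg_lf // eq_sym.
Qed.

Lemma in_D_Qmul (d : Defs.deriv K l) : in_D a m (fun j => Qp * d j).
Proof.
move=> i; exists (Qo i * dapply d (a i)).
by rewrite dapply_mul (Qp_split i) mulrA.
Qed.

Definition Emx i (j j' : 'I_l) : P :=
  if j' == j0 i then (if j == j0 i then lf i ^+ m i else (- (a i j / a i (j0 i)))%:MP)
  else (j == j')%:R.

Lemma dapply_Emx i j :
  dapply (Emx i j) (a i) = if j == j0 i then lf i ^+ m i * (a i (j0 i))%:MP else 0.
Proof.
rewrite /dapply (bigD1 (j0 i)) //= /Emx eqxx.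
have [e|ne] := eqVneq j (j0 i).
  rewrite big1 => [|j' nj]; last by rewrite (negbTE nj) e eq_sym (negbTE nj) scaler0.
  by rewrite addr0 mulrC mul_mpolyC.
rewrite (bigD1 j) //= big1 => [|j' /andP [nj nj']]; last first.
  by rewrite (negbTE nj) eq_sym (negbTE nj') scaler0.
rewrite (negbTE ne) eqxx addr0 -mul_mpolyC -mpolyCM mulrN mulrCA mulfV //.
by rewrite mulr1 mpolyCN -mul_mpolyC /= mulr1 addNr.
Qed.

Lemma in_D_Psi i j : in_D a m (fun j' => Qo i * Emx i j j').
Proof.
move=> i'; rewrite dapply_mul.
have [e|ne] := eqVneq i' i.
  rewrite e dapply_Emx; case: eqP => _.
    by exists (Qo i * (a i (j0 i))%:MP); rewrite mulrCA.
  by exists 0; rewrite !mulr0.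
have [R eR] := Qo_split ne.
by exists (R * dapply (Emx i j) (a i')); rewrite eR -mulrA.
Qed.

Lemma det_Psi i : \det (\matrix_(j, j') (Qo i * Emx i j j') : 'M[P]_l) = Qo i ^+ l * lf i ^+ m i.
Proof.
rewrite det_trig; last first.
  apply/is_trig_mxP => j j' lt; rewrite mxE /Emx.
  have [e|ne] := eqVneq j' (j0 i).
    have nj : j != j0 i by rewrite -e; apply/eqP => e'; move: lt; rewrite e' ltnn.
    by rewrite (negbTE nj) j0first ?mul0r ?oppr0 ?mpolyC0 ?mulr0 // -e.
  by have := ltn_eqF lt; rewrite -(inj_eq val_inj) /= => ->; rewrite mulr0.
under eq_bigr do rewrite mxE.
rewrite big_split /= prodr_const card_ord; congr (_ * _).
rewrite -[RHS](prod_if1 (j0 i)); apply: eq_bigr => j _; rewrite /Emx eqxx.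
by case: eqP.
Qed.

Lemma saito_nec (th : 'I_l -> Defs.deriv K l) :
  (forall k, in_D a m (th k)) ->
  (forall d, in_D a m d -> exists g : 'I_l -> P, forall j, d j = \sum_(k < l) g k * th k j) ->
  exists h, h \is a GRing.unit /\ \det (Mx th) = Qp * h.
Proof.
move=> Hth Hgen.
have [h eh] := det_dvd_Q (Mx_rows Hth).
exists h; split => //.
pose M := Mx th.
have Hsg i : sg i h != 0.
  have [G hG] := fin_all_exists (fun j => Hgen _ (in_D_Psi i j)).
  pose Gm : 'M[P]_l := \matrix_(j, k) G j k.
  have e1 : Gm *m M = \matrix_(j, j') (Qo i * Emx i j j').
    apply/matrixP => j j'; rewrite !mxE hG; apply: eq_bigr => k _.
    by rewrite /Gm /M /Mx !mxE.
  have := congr1 determinant e1; rewrite det_mulmx det_Psi eh (Qp_split i).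
  move=> e2.
  have e3 : \det Gm * Qo i * h = Qo i ^+ l.
    apply: (mulfI (expf_neq0 (m i) (lf_neq0 i))).
    rewrite [RHS]mulrC -e2; ring.
  apply/eqP => h0.
  have := congr1 (sig (a i) (j0 i)) e3.
  rewrite /sig !rmorphM rmorphXn /= -!/(sig _ _ _) h0 mulr0 => /esym /eqP.
  by rewrite expf_eq0 (negbTE (sg_Qo i)) andbF.
have [G hG] := fin_all_exists (fun j => Hgen _ (in_D_Qmul (fun j' => (j == j')%:R))).
pose Gm : 'M[P]_l := \matrix_(j, k) G j k.
have e1 : Gm *m M = Qp%:M.
  apply/matrixP => j j'; rewrite !mxE -mulr_natr hG; apply: eq_bigr => k _.
  by rewrite /Gm /M /Mx !mxE.
have := congr1 determinant e1; rewrite det_mulmx det_scalar eh => e2.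
apply: (@peel (index_enum 'I_n) (fun i => m i * l)%N h (\det Gm * Qp)) => [i _|]; first exact: Hsg.
have -> : h * (\det Gm * Qp) = \det Gm * (Qp * h) by ring.
rewrite e2 /Qp -prodrXl; apply: eq_bigr => i _; by rewrite exprM.
Qed.

End Arr.
Lemma first_nz (b : 'I_l -> K) : (exists j, b j != 0) ->
  exists j0, b j0 != 0 /\ forall j : 'I_l, (j < j0)%N -> b j = 0.
Proof.
move=> ex.
have exk : exists k, [exists j : 'I_l, (val j == k) && (b j != 0)].
  by case: ex => j hj; exists (val j); apply/existsP; exists j; rewrite eqxx hj.
case: (ex_minnP exk) => k /existsP [j /andP [/eqP ej hj]] min.
exists j; split => // j' lt; apply/eqP; apply: contraT => nz.
have := min (val j'); rewrite -ej leqNgt lt /= => H; apply: H.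
by apply/existsP; exists j'; rewrite eqxx nz.
Qed.

Lemma saito_nec_dh n (a : 'I_n -> 'I_l -> K) (m : 'I_n -> nat) (th : 'I_l -> Defs.deriv K l) :
  distinct_hyperplanes a ->
  (forall k, in_D a m (th k)) ->
  (forall d, in_D a m d -> exists g : 'I_l -> P, forall j, d j = \sum_(k < l) g k * th k j) ->
  exists h, h \is a GRing.unit /\ \det (Mx th) = Qp a m * h.
Proof.
move=> [hnz hnp]; have [j0 hj0] := fin_all_exists (fun i => first_nz (hnz i)).
exact: (@saito_nec n a m j0 (fun i => (hj0 i).1) (fun i => (hj0 i).2) hnp).
Qed.

Lemma saito_suff_dh n (a : 'I_n -> 'I_l -> K) (m : 'I_n -> nat) (th : 'I_l -> Defs.deriv K l) h :
  distinct_hyperplanes a ->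
  (forall k, in_D a m (th k)) -> h \is a GRing.unit -> \det (Mx th) = Qp a m * h ->
  (forall d, in_D a m d -> exists g : 'I_l -> P, forall j, d j = \sum_(k < l) g k * th k j) /\
  (forall g : 'I_l -> P, (forall j, \sum_(k < l) g k * th k j = 0) -> forall k, g k = 0).
Proof.
move=> [hnz hnp] Hth hU eM; have [j0 hj0] := fin_all_exists (fun i => first_nz (hnz i)).
split.
  move=> d Hd; exact: (saito_gen (fun i => (hj0 i).1) (fun i => (hj0 i).2) hnp Hth hU eM Hd).
exact: (saito_indep (fun i => (hj0 i).1) hU eM).
Qed.

End Generic.

Import Num.Theory.

Section Red.
Variable l : nat.
Local Notation PZ := {mpoly int[l]}.

Local Notation phi K := (map_mpoly (n:=l) (S:=K) intr).

Lemma phiD (K : fieldType) : {morph (@phi K) : x y / x + y}.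
Proof. exact: rmorphD. Qed.
Lemma phiM (K : fieldType) : {morph (@phi K) : x y / x * y}.
Proof. exact: rmorphM. Qed.
Lemma phiX (K : fieldType) z k : phi K (z ^+ k) = phi K z ^+ k.
Proof. exact: rmorphXn. Qed.
Lemma phin (K : fieldType) k : phi K k%:R = k%:R.
Proof. exact: rmorph_nat. Qed.
Lemma phi_sum (K : fieldType) (I : Type) (r : seq I) (F : I -> PZ) :
  phi K (\sum_(i <- r) F i) = \sum_(i <- r) phi K (F i).
Proof. exact: rmorph_sum. Qed.
Lemma phi_prod (K : fieldType) (I : Type) (r : seq I) (F : I -> PZ) :
  phi K (\prod_(i <- r) F i) = \prod_(i <- r) phi K (F i).
Proof. exact: rmorph_prod. Qed.
Lemma phi_coef (K : fieldType) z mo : (phi K z)@_mo = (z@_mo)%:~R.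
Proof. exact: mcoeff_map_mpoly. Qed.

Lemma phiQ_inj : injective (phi rat : PZ -> _).
Proof.
move=> x y e; apply/mpolyP => mo.
by apply: (@intr_inj rat); rewrite -!phi_coef e.
Qed.

Definition lformZ (b : 'I_l -> int) : PZ := \sum_(j < l) b j *: 'X_j.
Definition dapZ (d : 'I_l -> PZ) (b : 'I_l -> int) : PZ := \sum_(j < l) b j *: d j.

Lemma phi_lform (K : fieldType) b : phi K (lformZ b) = lform (fun j => (b j)%:~R).
Proof.
rewrite /lformZ phi_sum /lform; apply: eq_bigr => j _.
by rewrite map_mpolyZ map_mpolyX.
Qed.

Lemma phi_dap (K : fieldType) d b : phi K (dapZ d b) = dapply (fun j => phi K (d j)) (fun j => (b j)%:~R).
Proof.
rewrite /dapZ phi_sum /dapply; apply: eq_bigr => j _.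
by rewrite map_mpolyZ.
Qed.

Lemma clear1 (q : {mpoly rat[l]}) : exists N : nat, (0 < N)%N /\ exists z, phi rat z = N%:R * q.
Proof.
elim/mpolyind: q => [|c mo q _ _ [N [N0 [z ez]]]].
  by exists 1%N; split => //; exists 0; rewrite raddf0 mulr0.
exists (N * `|denq c|)%N; split; first by rewrite muln_gt0 N0 absz_gt0 denq_neq0.
exists ((N%:Z * numq c) *: 'X_[mo] + (`|denq c|%N)%:R * z).
rewrite phiD phiM phin ez map_mpolyZ map_mpolyX.
rewrite mulrDr natrM; congr (_ + _); last by ring.
rewrite -natrM mulr_natl scalerMnl; congr (_ *: _).
rewrite rmorphM /= numqE -[in LHS]absz_denq /=.
have -> : ((N%:Z : int)%:~R : rat) = N%:R by [].
have -> : (((`|denq c|%N)%:Z : int)%:~R : rat) = (`|denq c|%N)%:R by [].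
by rewrite -[c *+ _]mulr_natl natrM; ring.
Qed.

Lemma clear_seq (s : seq {mpoly rat[l]}) : exists N : nat, (0 < N)%N /\
  forall x, x \in s -> exists z, phi rat z = N%:R * x.
Proof.
elim: s => [|x s [N2 [N20 H2]]]; first by exists 1%N.
have [N1 [N10 [z1 e1]]] := clear1 x.
exists (N1 * N2)%N; split; first by rewrite muln_gt0 N10 N20.
move=> y; rewrite inE => /orP [/eqP ->|ys].
  by exists (N2%:R * z1); rewrite phiM phin e1 natrM; ring.
have [z2 e2] := H2 y ys.
by exists (N1%:R * z2); rewrite phiM phin e2 natrM; ring.
Qed.

End Red.

Lemma Fp_int_eq0 p (pr : prime p) (z : int) : ((z%:~R : 'F_p) == 0) = (p %| z)%Z.
Proof.
have ch := pchar_Fp pr.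
case: z => k.
  by rewrite /dvdz /= -(dvdn_pcharf ch).
rewrite NegzE rmorphN /= oppr_eq0 /dvdz /=.
by rewrite -(dvdn_pcharf ch).
Qed.

Local Notation phi l K := (map_mpoly (n:=l) (S:=K) intr).

Definition minor n l (alpha : 'I_n -> 'I_l -> int) (x : ('I_n * 'I_n) * ('I_l * 'I_l)) : int :=
  alpha x.1.1 x.2.1 * alpha x.1.2 x.2.2 - alpha x.1.1 x.2.2 * alpha x.1.2 x.2.1.

Lemma minor_nz n l (alpha : 'I_n -> 'I_l -> int) :
  distinct_hyperplanes (forms_in rat alpha) ->
  forall i i', i != i' -> exists j j', minor alpha ((i, i'), (j, j')) != 0.
Proof.
move=> [hnz hnp] i i' ne.
have [j' hj'] := hnz i'.
set c := forms_in rat alpha i j' / forms_in rat alpha i' j'.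
have : ~~ [forall j, forms_in rat alpha i j == c * forms_in rat alpha i' j].
  apply/negP => /forallP H; apply: (@hnp i i' ne c) => j; exact/eqP/H.
move=> /forallPn [j /eqP hj]; exists j, j'.
apply/eqP => h0; apply: hj.
have : (minor alpha (i, i', (j, j')))%:~R = 0 :> rat by rewrite h0.
rewrite /minor rmorphB !rmorphM /= => /eqP; rewrite subr_eq0 => /eqP e.
rewrite /c /forms_in; apply: (mulIf hj'); rewrite /forms_in in e.
rewrite /forms_in e [RHS]mulrAC divfK //.
Qed.

Lemma dist_Fp n l (alpha : 'I_n -> 'I_l -> int) p :
  distinct_hyperplanes (forms_in rat alpha) ->
  (forall (p : nat) (i : 'I_n), prime p -> exists j : 'I_l, ~~ (p%:Z %| alpha i j)%Z) ->
  prime p -> (\max_(x : ('I_n * 'I_n) * ('I_l * 'I_l)) `|minor alpha x|%N < p)%N ->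
  distinct_hyperplanes (forms_in 'F_p alpha).
Proof.
move=> hd hp pr lt; split.
  move=> i; have [j hj] := hp p i pr; exists j.
  by rewrite /forms_in Fp_int_eq0.
move=> i i' ne c H.
have [j [j' hm]] := minor_nz hd ne.
have : (minor alpha ((i, i'), (j, j')))%:~R == 0 :> 'F_p.
  by rewrite /minor rmorphB !rmorphM /= -!/(forms_in _ _ _ _) !H; apply/eqP; ring.
rewrite Fp_int_eq0 // /dvdz /= => /(dvdn_leq _); rewrite absz_gt0 => /(_ hm) hle.
have h2 := @leq_bigmax _ (fun x : ('I_n * 'I_n) * ('I_l * 'I_l) => `|minor alpha x|%N) ((i, i'), (j, j')).
 by have := leq_ltn_trans h2 lt; rewrite ltnNge hle.
Qed.

Lemma transfer (F : fieldType) l n (alpha : 'I_n -> 'I_l -> int) (m : 'I_n -> nat)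
    (e : 'I_l -> nat) (N : nat) (Th : 'I_l -> 'I_l -> {mpoly int[l]})
    (qz : 'I_l -> 'I_n -> {mpoly int[l]}) (hz uz : {mpoly int[l]}) :
  (forall k i, dapZ (Th k) (alpha i) = lformZ (alpha i) ^+ m i * qz k i) ->
  N%:R * \det (\matrix_(k, j) Th k j : 'M[{mpoly int[l]}]_l) =
    N%:R ^+ l * (\prod_(i < n) lformZ (alpha i) ^+ m i) * hz ->
  hz * uz = N%:R ^+ 2 ->
  (forall k j mo, (Th k j)@_mo != 0 -> mdeg mo = e k) ->
  distinct_hyperplanes (forms_in F alpha) ->
  (N%:R : F) != 0 ->
  free_with_exponents (forms_in F alpha) m e.
Proof.
move=> eqD eqDet eqHU Hhom hdF cnz.
set c : {mpoly F[l]} := N%:R.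
have cU : c \is a GRing.unit.
  apply/unitrPr; exists ((N%:R : F)^-1)%:MP.
  by rewrite /c -mpolyC_nat -mpolyCM divff.
pose thF : 'I_l -> Defs.deriv F l := fun k j => phi l F (Th k j).
have HinF k : in_D (forms_in F alpha) m (thF k).
  move=> i; exists (phi l F (qz k i)).
  by rewrite -phi_lform -rmorphXn -rmorphM /= -eqD phi_dap.
have phiQp : phi l F (\prod_(i < n) lformZ (alpha i) ^+ m i) = Qp (forms_in F alpha) m.
  by rewrite rmorph_prod; apply: eq_bigr => i _; rewrite rmorphXn /= phi_lform.
have eDF : c * \det (Mx thF) = c ^+ l * Qp (forms_in F alpha) m * phi l F hz.
  have -> : Mx thF = map_mx (phi l F) (\matrix_(k, j) Th k j) by apply/matrixP => k j; rewrite !mxE.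
  have E := congr1 (phi l F) eqDet.
  rewrite !rmorphM rmorphXn !rmorph_nat /= phiQp -det_map_mx in E.
  exact: E.
have hU' : c^-1 * c ^+ l * phi l F hz \is a GRing.unit.
  rewrite !unitrM unitrV unitrX cU //=.
  apply/unitrPr; exists (phi l F uz * (c ^+ 2)^-1).
  by rewrite mulrA -rmorphM eqHU rmorphXn rmorph_nat -/c mulrV // unitrX.
have eM' : \det (Mx thF) = Qp (forms_in F alpha) m * (c^-1 * c ^+ l * phi l F hz).
  rewrite -[LHS](mulKr cU) eDF; ring.
have [Hgen' Hind'] := saito_suff_dh hdF HinF hU' eM'.
exists thF; split => // k j mo.
rewrite mcoeff_msupp /thF mcoeff_map_mpoly => nz.
apply: (Hhom k j); apply: contraNneq nz => ->; exact/eqP.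
Qed.

Unset Implicit Arguments.

Theorem corollary3p4 (l n : nat) (alpha : 'I_n -> 'I_l -> int)
    (m : 'I_n -> nat) (e : 'I_l -> nat) :
  distinct_hyperplanes (forms_in rat alpha) ->
  (forall (p : nat) (i : 'I_n), prime p ->
     exists j : 'I_l, ~~ (p%:Z %| alpha i j)%Z) ->
  free_with_exponents (forms_in rat alpha) m e ->
  exists N : nat, forall p : nat, prime p -> (N < p)%N ->
    free_with_exponents (forms_in 'F_p alpha) m e.
Proof.
move=> hd hp [th [Hin Hhom Hgen Hind]].
have [h [hU eM]] := saito_nec_dh hd Hin Hgen.
have [u hu] := unitrPr hU.
have [q hq] := fin_all_exists (fun k => fin_all_exists (Hin k)).
pose s := [seq th x.1 x.2 | x <- enum {: 'I_l * 'I_l}] ++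
          [seq q x.1 x.2 | x <- enum {: 'I_l * 'I_n}] ++ [:: h; u].
have [N [N0 HN]] := clear_seq s.
have H1 k j : exists z, phi l rat z = N%:R * th k j.
  apply: HN; rewrite mem_cat; apply/orP; left.
  by apply/mapP; exists (k, j); rewrite ?mem_enum.
have H2 k i : exists z, phi l rat z = N%:R * q k i.
  apply: HN; rewrite mem_cat; apply/orP; right; rewrite mem_cat; apply/orP; left.
  by apply/mapP; exists (k, i); rewrite ?mem_enum.
have [Th hTh] := fin_all_exists (fun k => fin_all_exists (H1 k)).
have [qz hqz] := fin_all_exists (fun k => fin_all_exists (H2 k)).
have [hz hhz] : exists z, phi l rat z = N%:R * h.
  by apply: HN; rewrite !mem_cat !inE eqxx !orbT.
have [uz huz] : exists z, phi l rat z = N%:R * u.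
  by apply: HN; rewrite !mem_cat !inE eqxx !orbT.
have eqD k i : dapZ (Th k) (alpha i) = lformZ (alpha i) ^+ m i * qz k i.
  apply: phiQ_inj; rewrite phi_dap rmorphM rmorphXn /= phi_lform hqz.
  have -> : dapply (fun j => phi l rat (Th k j)) (fun j => (alpha i j)%:~R)
      = dapply (fun j => N%:R * th k j) (forms_in rat alpha i).
    by rewrite /dapply; apply: eq_bigr => j _; rewrite hTh.
  by rewrite dapply_mul hq; rewrite mulrCA.
pose QpZ := \prod_(i < n) lformZ (alpha i) ^+ m i.
have phiQp (K : fieldType) : phi l K QpZ = Qp (forms_in K alpha) m.
  by rewrite rmorph_prod; apply: eq_bigr => i _; rewrite rmorphXn /= phi_lform.
pose MZ : 'M[{mpoly int[l]}]_l := \matrix_(k, j) Th k j.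
have eqDet : N%:R * \det MZ = N%:R ^+ l * QpZ * hz.
  apply: phiQ_inj; rewrite !rmorphM rmorphXn /= !rmorph_nat phiQp hhz.
  rewrite -det_map_mx.
  have -> : map_mx (phi l rat) MZ = (N%:R : {mpoly rat[l]}) *: Mx th.
    by apply/matrixP => k j; rewrite !mxE hTh.
  by rewrite detZ eM; ring.
have eqHU : hz * uz = N%:R ^+ 2.
  apply: phiQ_inj; rewrite rmorphM rmorphXn /= rmorph_nat hhz huz.
  by rewrite mulrACA hu mulr1 expr2.
exists (maxn N (\max_(x : ('I_n * 'I_n) * ('I_l * 'I_l)) `|minor alpha x|%N)).
move=> p pr; rewrite gtn_max => /andP [ltN ltB].
have hdF := dist_Fp hd hp pr ltB.
have cnz : (N%:R : 'F_p) != 0.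
  rewrite -(dvdn_pcharf (pchar_Fp pr)); apply/negP => /(dvdn_leq N0).
  by rewrite leqNgt ltN.
apply: (transfer eqD eqDet eqHU _ hdF cnz).
move=> k j mo nz; apply: (Hhom k j); rewrite mcoeff_msupp.
have : (phi l rat (Th k j))@_mo != 0.
  by rewrite mcoeff_map_mpoly intr_eq0.
rewrite hTh mulr_natl mcoeffMn; apply: contraNneq => ->; by rewrite mul0rn.
Qed.
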